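(* Let $x_0\in\mathbb{R}\cup\{+\infty\}$, $T<x_0$, $I:=[T,x_0)$, and let $\phi_1,\phi_2\in C^1(I)$ satisfy $\phi_2(x)=o(\phi_1(x))$ as $x\to x_0$, $\phi_1(x)>0$ and $\phi_2(x)\neq0$ for all $x\in I$, and $W(\phi_1,\phi_2;x)>0$ for all $x\in I$. Define on $I$ $$\overline\psi_1:=\phi_1,\quad \overline\psi_2(x):=\phi_1(x)\int_T^x\Big(\frac{\phi_2(t)}{\phi_1(t)}\Big)'dt;\qquad \overline{\overline\psi}_1:=|\phi_2|,\quad \overline{\overline\psi}_2(x):=-|\phi_2(x)|\int_T^x\Big(\frac{\phi_1(t)}{\phi_2(t)}\Big)'dt.$$ Then each of the pairs $(\overline\psi_1,\overline\psi_2)$ and $(\overline{\overline\psi}_1,\overline{\overline\psi}_2)$ consists of $C^1(I)$ functions with positive first component and positive Wronskian on $I$, and $$f\in\mathcal{C}(\phi_1,\phi_2;I)\iff f\in\mathcal{C}(\overline\psi_1,\overline\psi_2;I)\iff f\in\mathcal{C}(\overline{\overline\psi}_1,\overline{\overline\psi}_2;I).$$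
   Context: $W(g,h;x):=g(x)h'(x)-g'(x)h(x)$. For continuous $\psi_1,\psi_2$ on an interval $J$, $f:J\to\mathbb{R}$ belongs to $\mathcal{C}(\psi_1,\psi_2;J)$ iff for all $t_1<t_2<t_3$ in $J$ $$\det\begin{pmatrix}\psi_1(t_1)&\psi_1(t_2)&\psi_1(t_3)\\ \psi_2(t_1)&\psi_2(t_2)&\psi_2(t_3)\\ f(t_1)&f(t_2)&f(t_3)\end{pmatrix}\ge0.$$ *)

(* Defs.v *)
From Stdlib Require Import Reals Lra.
From Coquelicot Require Import Coquelicot.
Open Scope R_scope.

Definition in_I (T : R) (x0 : Rbar) (x : R) : Prop := T <= x /\ Rbar_lt x x0.

(* f has derivative f'(x) at x within the set D (one-sided at endpoints). *)
Definition has_deriv_within (D : R -> Prop) (f f' : R -> R) (x : R) : Prop :=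
  filterlim (fun y => (f y - f x) / (y - x))
            (within (fun y => D y /\ y <> x) (locally x)) (locally (f' x)).

Definition C1_on (D : R -> Prop) (f f' : R -> R) : Prop :=
  forall x, D x ->
    has_deriv_within D f f' x /\
    filterlim f' (within D (locally x)) (locally (f' x)).

Definition W (g g' h h' : R -> R) (x : R) : R := g x * h' x - g' x * h x.

Definition det3 (a1 a2 a3 b1 b2 b3 c1 c2 c3 : R) : R :=
  a1 * (b2 * c3 - b3 * c2) - a2 * (b1 * c3 - b3 * c1) + a3 * (b1 * c2 - b2 * c1).

Definition inC (psi1 psi2 : R -> R) (J : R -> Prop) (f : R -> R) : Prop :=
  forall t1 t2 t3, J t1 -> J t2 -> J t3 -> t1 < t2 -> t2 < t3 ->
    0 <= det3 (psi1 t1) (psi1 t2) (psi1 t3)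
              (psi2 t1) (psi2 t2) (psi2 t3)
              (f t1) (f t2) (f t3).

Definition little_o_at (T : R) (x0 : Rbar) (phi2 phi1 : R -> R) : Prop :=
  forall eps : R, 0 < eps ->
    exists y : R, Rbar_lt y x0 /\
      forall x, in_I T x0 x -> y < x -> Rabs (phi2 x) <= eps * Rabs (phi1 x).

(* Main.v *)
Require Import Defs.
From Stdlib Require Import Reals Lra.
From Coquelicot Require Import Coquelicot.
Open Scope R_scope.

Lemma within_ed (D : R -> Prop) f x L :
  filterlim f (within D (locally x)) (locally L) ->
  forall eps, 0 < eps -> exists delta, 0 < delta /\
    forall y, D y -> Rabs (y - x) < delta -> Rabs (f y - L) < eps.
Proof.
  intros H eps He.
  assert (HL : locally L (fun z => Rabs (z - L) < eps)).
  { exists (mkposreal eps He). intros z Hz. exact Hz. }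
  destruct (H _ HL) as [d Hd].
  exists d. split; [apply cond_pos|]. intros y Dy Hy. apply (Hd y); [exact Hy| exact Dy].
Qed.

Definition CW (D : R -> Prop) (f : R -> R) x := forall eps, 0 < eps -> exists delta, 0 < delta /\
    forall y, D y -> Rabs (y - x) < delta -> Rabs (f y - f x) < eps.

Lemma CW_of_lim (D : R -> Prop) (f : R -> R) x : filterlim f (within D (locally x)) (locally (f x)) -> CW D f x.
Proof. intros H. exact (within_ed D f x _ H). Qed.

Lemma CW_of_deriv (D : R -> Prop) (f f' : R -> R) x : has_deriv_within D f f' x -> CW D f x.
Proof.
  intros H eps He.
  destruct (within_ed _ _ _ _ H 1 ltac:(lra)) as [d [Hd H1]].
  set (K := Rabs (f' x) + 1).
  assert (HK : 0 < K) by (unfold K; pose proof (Rabs_pos (f' x)); lra).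
  exists (Rmin d (eps / K)). split.
  { apply Rmin_pos; [lra| apply Rdiv_lt_0_compat; lra]. }
  intros y Dy Hy.
  destruct (Req_dec y x) as [->|Hne].
  { replace (f x - f x) with 0 by ring. rewrite Rabs_R0. lra. }
  assert (Hy1 : Rabs (y - x) < d) by (eapply Rlt_le_trans; [exact Hy| apply Rmin_l]).
  assert (Hy2 : Rabs (y - x) < eps / K) by (eapply Rlt_le_trans; [exact Hy| apply Rmin_r]).
  specialize (H1 y (conj Dy Hne) Hy1).
  assert (Hyx : y - x <> 0) by lra.
  replace (f y - f x) with (((f y - f x) / (y - x)) * (y - x)) by (field; exact Hyx).
  rewrite Rabs_mult.
  assert (Rabs ((f y - f x) / (y - x)) <= K).
  { unfold K. replace ((f y - f x) / (y - x)) with (((f y - f x) / (y - x) - f' x) + f' x) by ring.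
    eapply Rle_trans; [apply Rabs_triang|]. lra. }
  assert (0 < Rabs (y - x)) by (apply Rabs_pos_lt; exact Hyx).
  apply Rle_lt_trans with (K * Rabs (y - x)).
  { apply Rmult_le_compat_r; lra. }
  apply Rmult_lt_reg_r with (/ K). apply Rinv_0_lt_compat; lra.
  replace (K * Rabs (y - x) * / K) with (Rabs (y - x)) by (field; lra).
  exact Hy2.
Qed.

Definition clamp a b y := Rmax a (Rmin b y).

Lemma clamp_in a b y : a <= b -> a <= clamp a b y <= b.
Proof. intros. unfold clamp, Rmax, Rmin. repeat destruct Rle_dec; lra. Qed.

Lemma clamp_id a b y : a <= y <= b -> clamp a b y = y.
Proof. intros. unfold clamp, Rmax, Rmin. repeat destruct Rle_dec; lra. Qed.

Lemma clamp_lip a b y z : a <= b -> Rabs (clamp a b y - clamp a b z) <= Rabs (y - z).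
Proof.
  intros. unfold clamp, Rmax, Rmin. unfold Rabs.
  repeat destruct Rle_dec; repeat destruct Rcase_abs; lra.
Qed.

Lemma clamp_cont (D : R -> Prop) f a b : a <= b -> (forall y, a <= y <= b -> D y) ->
  (forall y, a <= y <= b -> CW D f y) -> continuity (fun y => f (clamp a b y)).
Proof.
  intros Hab HD HC z. unfold continuity_pt, continue_in, limit1_in, limit_in. simpl. unfold R_dist.
  intros eps He.
  destruct (HC (clamp a b z) (clamp_in a b z Hab) eps He) as [d [Hd H]].
  exists d. split; [exact Hd|]. intros y [_ Hy].
  apply H. apply HD. apply clamp_in; exact Hab.
  eapply Rle_lt_trans; [apply clamp_lip; exact Hab| exact Hy].
Qed.

Lemma interior T (x0 : Rbar) x : T < x -> Rbar_lt x x0 ->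
  exists d, 0 < d /\ forall y, Rabs (y - x) < d -> in_I T x0 y.
Proof.
  intros H1 H2. destruct x0 as [b| |]; simpl in H2.
  - exists (Rmin (x - T) (b - x)). split. apply Rmin_pos; lra.
    intros y Hy. pose proof (Rmin_l (x - T) (b - x)). pose proof (Rmin_r (x - T) (b - x)).
    unfold Rabs in Hy. destruct Rcase_abs in Hy; split; simpl; lra.
  - exists (x - T). split. lra. intros y Hy. unfold Rabs in Hy. destruct Rcase_abs in Hy; split; simpl; auto; lra.
  - contradiction.
Qed.

Lemma deriv_interior T x0 f f' x : has_deriv_within (in_I T x0) f f' x -> T < x -> Rbar_lt x x0 ->
  derivable_pt_lim f x (f' x).
Proof.
  intros H H1 H2 eps He.
  destruct (within_ed _ _ _ _ H eps He) as [d [Hd Hq]].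
  destruct (interior T x0 x H1 H2) as [d2 [Hd2 Hi]].
  exists (mkposreal (Rmin d d2) (Rmin_pos _ _ Hd Hd2)). simpl. intros h Hh Hhd.
  replace h with ((x + h) - x) at 2 by ring.
  apply Hq.
  - split. apply Hi. replace (x + h - x) with h by ring. eapply Rlt_le_trans; [exact Hhd|apply Rmin_r]. lra.
  - replace (x + h - x) with h by ring. eapply Rlt_le_trans; [exact Hhd|apply Rmin_l].
Qed.
Lemma cpt_mult f g x : continuity_pt f x -> continuity_pt g x -> continuity_pt (fun y => f y * g y) x.
Proof. intros. exact (continuity_pt_mult f g x H H0). Qed.
Lemma cpt_minus f g x : continuity_pt f x -> continuity_pt g x -> continuity_pt (fun y => f y - g y) x.
Proof. intros. exact (continuity_pt_minus f g x H H0). Qed.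
Lemma cpt_div f g x : continuity_pt f x -> continuity_pt g x -> g x <> 0 -> continuity_pt (fun y => f y / g y) x.
Proof. intros. exact (continuity_pt_div f g x H H0 H1). Qed.

Lemma sub_I T (x0 : Rbar) x y : in_I T x0 x -> T <= y <= x -> in_I T x0 y.
Proof. intros [H1 H2] H. split. lra. eapply Rbar_le_lt_trans; [|exact H2]. simpl. lra. Qed.

Lemma ftc_quot T x0 u u' v v' : C1_on (in_I T x0) u u' -> C1_on (in_I T x0) v v' ->
  (forall x, in_I T x0 x -> v x <> 0) -> forall x, in_I T x0 x ->
  RInt (fun t => Derive (fun s => u s / v s) t) T x = u x / v x - u T / v T.
Proof.
  intros Hu Hv Hnz x Hx.
  destruct (Req_dec x T) as [->|Hne].
  { rewrite RInt_point. simpl. unfold zero. simpl. ring. }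
  assert (HTx : T < x) by (destruct Hx; lra).
  set (c := clamp T x).
  assert (HI : forall y, T <= y <= x -> in_I T x0 y) by (intros; eapply sub_I; eauto).
  assert (Cu : continuity (fun y => u (c y))).
  { apply (clamp_cont (in_I T x0)); [lra|exact HI|]. intros y Hy. apply CW_of_deriv with u'. apply Hu, HI, Hy. }
  assert (Cv : continuity (fun y => v (c y))).
  { apply (clamp_cont (in_I T x0)); [lra|exact HI|]. intros y Hy. apply CW_of_deriv with v'. apply Hv, HI, Hy. }
  assert (Cu' : continuity (fun y => u' (c y))).
  { apply (clamp_cont (in_I T x0)); [lra|exact HI|]. intros y Hy. apply CW_of_lim. apply Hu, HI, Hy. }
  assert (Cv' : continuity (fun y => v' (c y))).
  { apply (clamp_cont (in_I T x0)); [lra|exact HI|]. intros y Hy. apply CW_of_lim. apply Hv, HI, Hy. }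
  assert (Hcin : forall y, T <= c y <= x) by (intros; apply clamp_in; lra).
  assert (Hvc : forall y, v (c y) <> 0) by (intros; apply Hnz, HI, Hcin).
  set (h := fun t => (u' t * v t - v' t * u t) / (v t)²).
  set (hc := fun y => h (c y)).
  set (gc := fun y => u (c y) / v (c y)).
  assert (Chc : forall y, continuity_pt hc y).
  { intros y. unfold hc, h. apply cpt_div.
    apply cpt_minus; apply cpt_mult; auto.
    unfold Rsqr. apply cpt_mult; auto.
    unfold Rsqr. intro E. apply (Hvc y). apply Rmult_integral in E. tauto. }
  assert (Cgc : forall y, continuity_pt gc y).
  { intros y. unfold gc. apply cpt_div; auto. }
  assert (Hd : forall y, T < y < x -> derivable_pt_lim (fun s => u s / v s) y (h y)).
  { intros y Hy. assert (Iy : in_I T x0 y) by (apply HI; lra).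
    pose proof (derivable_pt_lim_div u v y (u' y) (v' y)
      (deriv_interior T x0 u u' y (proj1 (Hu y Iy)) (proj1 Hy) (proj2 Iy))
      (deriv_interior T x0 v v' y (proj1 (Hv y Iy)) (proj1 Hy) (proj2 Iy)) (Hnz y Iy)).
    exact H. }
  assert (Hex : forall a b, ex_RInt hc a b).
  { intros a b. apply (ex_RInt_continuous (V:=R_CompleteNormedModule)). intros z _. apply continuity_pt_filterlim. apply Chc. }
  set (H := fun y => RInt hc T y).
  assert (HH : forall y, is_derive H y (hc y)).
  { intros y. apply (is_derive_RInt hc H T y). apply filter_forall. intros b. apply (RInt_correct (V:=R_CompleteNormedModule)). apply Hex.
    apply continuity_pt_filterlim. apply Chc. }
  destruct (MVT_gen (fun y => H y - gc y) T x (fun _ => 0)) as [z [_ Hz]].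
  - rewrite Rmin_left, Rmax_right by lra. intros y Hy.
    replace 0 with (minus (hc y) (h y)).
    2:{ unfold hc, c. rewrite clamp_id by lra. unfold minus, plus, opp. simpl. ring. }
    apply (is_derive_minus H gc). apply HH.
    apply is_derive_ext_loc with (fun s => u s / v s).
    + exists (mkposreal _ (Rmin_pos (y - T) (x - y) ltac:(lra) ltac:(lra))).
      intros t Ht. change (Rabs (t - y) < Rmin (y - T) (x - y)) in Ht.
      pose proof (Rmin_l (y - T) (x - y)). pose proof (Rmin_r (y - T) (x - y)).
      unfold gc, c. rewrite clamp_id. reflexivity. unfold Rabs in Ht. destruct Rcase_abs in Ht; lra.
    + apply is_derive_Reals. apply Hd. exact Hy.
  - rewrite Rmin_left, Rmax_right by lra. intros y Hy.
    apply cpt_minus; [|apply Cgc]. apply continuity_pt_filterlim.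
    apply (ex_derive_continuous (K:=R_AbsRing) (V:=R_NormedModule) H). exists (hc y). apply HH.
  - assert (E : RInt (fun t => Derive (fun s => u s / v s) t) T x = H x).
    { unfold H. apply RInt_ext. rewrite Rmin_left, Rmax_right by lra. intros t Ht.
      unfold hc, c. rewrite clamp_id by lra. apply is_derive_unique. apply is_derive_Reals. apply Hd. exact Ht. }
    rewrite E.
    assert (H T = 0) by (unfold H; rewrite RInt_point; reflexivity).
    unfold gc, c in Hz. rewrite (clamp_id T x x), (clamp_id T x T) in Hz by lra. lra.
Qed.
Lemma sign_const T x0 f f' : C1_on (in_I T x0) f f' -> (forall x, in_I T x0 x -> f x <> 0) ->
  in_I T x0 T -> forall x, in_I T x0 x -> 0 < f x * f T.
Proof.
  intros Hf Hnz IT x Hx.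
  pose proof (Hnz x Hx). pose proof (Hnz T IT).
  destruct (Req_dec x T) as [->|Hne].
  { destruct (Rlt_or_le 0 (f T)); nra. }
  assert (HTx : T < x) by (destruct Hx; lra).
  assert (HI : forall y, T <= y <= x -> in_I T x0 y) by (intros; eapply sub_I; eauto).
  assert (Cf : continuity (fun y => f (clamp T x y))).
  { apply (clamp_cont (in_I T x0)); [lra|exact HI|]. intros y Hy. apply CW_of_deriv with f'. apply Hf, HI, Hy. }
  destruct (Rlt_or_le 0 (f x * f T)) as [|Hle]; [assumption|exfalso].
  assert (Hc : forall y, f (clamp T x y) = 0 -> False).
  { intros y E. apply (Hnz (clamp T x y)). apply HI, clamp_in. lra. exact E. }
  destruct (Rlt_or_le 0 (f T)) as [HfT|HfT].
  - assert (f x < 0) by (destruct (Rlt_or_le 0 (f x)); nra).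
    destruct (IVT (- (fun y => f (clamp T x y)))%F T x (continuity_opp _ Cf) HTx) as [z [_ Hz]].
    + unfold opp_fct. rewrite clamp_id by lra. lra.
    + unfold opp_fct. rewrite clamp_id by lra. lra.
    + apply (Hc z). unfold opp_fct in Hz. lra.
  - assert (0 < f x) by (destruct (Rlt_or_le 0 (f x)); nra).
    destruct (IVT (fun y => f (clamp T x y)) T x Cf HTx) as [z [_ Hz]].
    + rewrite clamp_id by lra. lra.
    + rewrite clamp_id by lra. lra.
    + exact (Hc z Hz).
Qed.

Lemma lim_scal_plus {F : (R -> Prop) -> Prop} {FF : Filter F} (p q : R -> R) l1 l2 a b :
  filterlim p F (locally l1) -> filterlim q F (locally l2) ->
  filterlim (fun y => a * p y + b * q y) F (locally (a * l1 + b * l2)).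
Proof.
  intros Hp Hq.
  assert (Ha : filterlim (fun y => a * p y) F (locally (a * l1))).
  { apply (filterlim_comp_2 (G:=locally a) (H:=locally l1) (fun _ => a) p Rmult). apply filterlim_const. exact Hp. exact (filterlim_mult a l1). }
  assert (Hb : filterlim (fun y => b * q y) F (locally (b * l2))).
  { apply (filterlim_comp_2 (G:=locally b) (H:=locally l2) (fun _ => b) q Rmult). apply filterlim_const. exact Hq. exact (filterlim_mult b l2). }
  apply (filterlim_comp_2 (G:=locally (a*l1)) (H:=locally (b*l2)) (fun y => a * p y) (fun y => b * q y) Rplus Ha Hb).
  exact (filterlim_plus (K:=R_AbsRing) (a * l1) (b * l2)).
Qed.

Lemma C1_lin (D : R -> Prop) f f' g g' a b : C1_on D f f' -> C1_on D g g' ->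
  C1_on D (fun x => a * f x + b * g x) (fun x => a * f' x + b * g' x).
Proof.
  intros Hf Hg; unfold C1_on in *; intros x Dx. destruct (Hf x Dx) as [Hf1 Hf2]. destruct (Hg x Dx) as [Hg1 Hg2]. split.
  - unfold has_deriv_within in *.
    eapply filterlim_ext_loc; [|apply (lim_scal_plus _ _ _ _ a b Hf1 Hg1)].
    unfold within; apply filter_forall. intros y [_ Hy]. field. lra.
  - apply (lim_scal_plus _ _ _ _ a b Hf2 Hg2).
Qed.

Lemma C1_ext (D : R -> Prop) f f' g : C1_on D f f' -> (forall x, D x -> f x = g x) -> C1_on D g f'.
Proof.
  intros Hf E; unfold C1_on in *; intros x Dx. destruct (Hf x Dx) as [H1 H2]. split; [|exact H2].
  unfold has_deriv_within in *.
  eapply filterlim_ext_loc; [|exact H1].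
  unfold within; apply filter_forall. intros y [Dy _]. rewrite (E y Dy), (E x Dx). reflexivity.
Qed.

Lemma LC (D : R -> Prop) p1 p1' p2 p2' g1 g2 a b c d :
  C1_on D p1 p1' -> C1_on D p2 p2' -> a * d - b * c = 1 ->
  (forall x, D x -> g1 x = a * p1 x + b * p2 x) ->
  (forall x, D x -> g2 x = c * p1 x + d * p2 x) ->
  C1_on D g1 (fun x => a * p1' x + b * p2' x) /\
  C1_on D g2 (fun x => c * p1' x + d * p2' x) /\
  (forall x, D x -> W g1 (fun x => a * p1' x + b * p2' x) g2 (fun x => c * p1' x + d * p2' x) x
                   = W p1 p1' p2 p2' x) /\
  (forall f, inC p1 p2 D f <-> inC g1 g2 D f).
Proof.
  intros H1 H2 Hdet E1 E2. split; [|split; [|split]].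
  - apply C1_ext with (fun x => a * p1 x + b * p2 x). apply C1_lin; auto. intros; symmetry; auto.
  - apply C1_ext with (fun x => c * p1 x + d * p2 x). apply C1_lin; auto. intros; symmetry; auto.
  - intros x Dx. unfold W. rewrite E1, E2 by exact Dx.
    transitivity ((a * d - b * c) * (p1 x * p2' x - p1' x * p2 x)); [ring|rewrite Hdet; ring].
  - intros f. unfold inC.
    assert (K : forall t1 t2 t3, D t1 -> D t2 -> D t3 ->
      det3 (g1 t1) (g1 t2) (g1 t3) (g2 t1) (g2 t2) (g2 t3) (f t1) (f t2) (f t3)
      = det3 (p1 t1) (p1 t2) (p1 t3) (p2 t1) (p2 t2) (p2 t3) (f t1) (f t2) (f t3)).
    { intros t1 t2 t3 D1 D2 D3. rewrite !E1, !E2 by assumption. unfold det3.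
      transitivity ((a * d - b * c) * (p1 t1 * (p2 t2 * f t3 - p2 t3 * f t2) -
        p1 t2 * (p2 t1 * f t3 - p2 t3 * f t1) + p1 t3 * (p2 t1 * f t2 - p2 t2 * f t1))); [ring|rewrite Hdet; ring]. }
    split; intros H t1 t2 t3 D1 D2 D3 L1 L2; [rewrite K|rewrite <- K]; auto.
Qed.
Theorem lemma7p5 (x0 : Rbar) (T : R) (HT : Rbar_lt T x0)
  (phi1 phi1' phi2 phi2' : R -> R)
  (H1 : C1_on (in_I T x0) phi1 phi1')
  (H2 : C1_on (in_I T x0) phi2 phi2')
  (Ho : little_o_at T x0 phi2 phi1)
  (Hpos : forall x, in_I T x0 x -> 0 < phi1 x)
  (Hnz : forall x, in_I T x0 x -> phi2 x <> 0)
  (HW : forall x, in_I T x0 x -> 0 < W phi1 phi1' phi2 phi2' x) :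
  let psi1 := phi1 in
  let psi2 := fun x => phi1 x * RInt (fun t => Derive (fun s => phi2 s / phi1 s) t) T x in
  let chi1 := fun x => Rabs (phi2 x) in
  let chi2 := fun x => - Rabs (phi2 x) * RInt (fun t => Derive (fun s => phi1 s / phi2 s) t) T x in
  (exists psi1' psi2' : R -> R,
     C1_on (in_I T x0) psi1 psi1' /\ C1_on (in_I T x0) psi2 psi2' /\
     forall x, in_I T x0 x -> 0 < psi1 x /\ 0 < W psi1 psi1' psi2 psi2' x) /\
  (exists chi1' chi2' : R -> R,
     C1_on (in_I T x0) chi1 chi1' /\ C1_on (in_I T x0) chi2 chi2' /\
     forall x, in_I T x0 x -> 0 < chi1 x /\ 0 < W chi1 chi1' chi2 chi2' x) /\
  (forall f : R -> R,
     (inC phi1 phi2 (in_I T x0) f <-> inC psi1 psi2 (in_I T x0) f) /\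
     (inC psi1 psi2 (in_I T x0) f <-> inC chi1 chi2 (in_I T x0) f)).
Proof.
  intros psi1 psi2 chi1 chi2.
  assert (IT : in_I T x0 T) by (split; [lra|exact HT]).
  assert (Hnz1 : forall x, in_I T x0 x -> phi1 x <> 0) by (intros x Hx; specialize (Hpos x Hx); lra).
  pose proof (ftc_quot T x0 phi2 phi2' phi1 phi1' H2 H1 Hnz1) as F1.
  pose proof (ftc_quot T x0 phi1 phi1' phi2 phi2' H1 H2 Hnz) as F2.
  set (c := phi2 T / phi1 T).
  destruct (LC (in_I T x0) phi1 phi1' phi2 phi2' psi1 psi2 1 0 (- c) 1 H1 H2 ltac:(ring))
    as [P1 [P2 [PW PC]]].
  { intros. unfold psi1. ring. }
  { intros x Hx. unfold psi2. rewrite F1 by exact Hx. unfold c. field. split; apply Hnz1; auto. }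
  assert (Hs : exists s, s * s = 1 /\ forall x, in_I T x0 x -> Rabs (phi2 x) = s * phi2 x).
  { pose proof (sign_const T x0 phi2 phi2' H2 Hnz IT) as S.
    destruct (Rlt_or_le 0 (phi2 T)) as [Hp|Hn].
    - exists 1. split. ring. intros x Hx. specialize (S x Hx).
      rewrite Rabs_right. ring. destruct (Rlt_or_le 0 (phi2 x)); nra.
    - exists (-1). split. ring. intros x Hx. specialize (S x Hx). pose proof (Hnz T IT).
      rewrite Rabs_left. ring. destruct (Rlt_or_le 0 (phi2 x)); nra. }
  destruct Hs as [s [Hs1 Hs2]].
  set (d := phi1 T / phi2 T).
  destruct (LC (in_I T x0) phi1 phi1' phi2 phi2' chi1 chi2 0 s (- s) (s * d) H1 H2 ltac:(nra))
    as [Q1 [Q2 [QW QC]]].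
  { intros x Hx. unfold chi1. rewrite Hs2 by exact Hx. ring. }
  { intros x Hx. unfold chi2. rewrite Hs2 by exact Hx. rewrite F2 by exact Hx. unfold d.
    field. split; apply Hnz; auto. }
  split; [|split].
  - eexists; eexists; split; [exact P1|split; [exact P2|]].
    intros x Hx. split. apply Hpos, Hx. rewrite PW by exact Hx. apply HW, Hx.
  - eexists; eexists; split; [exact Q1|split; [exact Q2|]].
    intros x Hx. split. unfold chi1. apply Rabs_pos_lt, Hnz, Hx. rewrite QW by exact Hx. apply HW, Hx.
  - intros f. split. apply PC. rewrite <- PC. apply QC.
Qed.
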